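(* Let $R$ be a noncommutative division algebra over a field $F$, let $n\geq 2$ be an integer, and let $p\in F[x]$ be a nonconstant polynomial. Then there exist $A,B\in\mathrm{M}_n(R)$ such that $\mathrm{trace}\big(p(AB)-p(BA)\big)\neq 0$.
   Context: For a matrix $X\in \mathrm{M}_n(R)$, $\mathrm{trace}(X)$ denotes the sum of its diagonal entries (an element of $R$). *)

(* Defs.v *)
From HB Require Import structures.
From mathcomp Require Import all_boot all_order all_algebra.
Set Implicit Arguments. Unset Strict Implicit. Unset Printing Implicit Defensive.
Import GRing.Theory.
Local Open Scope ring_scope.

Definition mx_peval (F : fieldType) (R : algType F) (n : nat)
    (p : {poly F}) (M : 'M[R]_n) : 'M[R]_n :=
  \sum_(i < size p) ((p`_i)%:A)%:M *m M ^+ i.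

Definition is_division_algebra (F : fieldType) (R : unitAlgType F) : Prop :=
  forall x : R, x != 0 -> x \is a GRing.unit.

(* Main.v *)
Require Import Defs.
From HB Require Import structures.
From mathcomp Require Import all_boot all_order all_algebra all_field.
From Stdlib Require Classical_Prop.
Set Implicit Arguments. Unset Strict Implicit. Unset Printing Implicit Defensive.
Import GRing.Theory.
Local Open Scope ring_scope.

Section FinSub.
Variable R : unitRingType.
Variable w : seq R.
Hypotheses (w0 : 0 \in w) (w1 : 1 \in w) (wN : forall a, a \in w -> - a \in w)
  (wD : forall a b, a \in w -> b \in w -> a + b \in w)
  (wM : forall a b, a \in w -> b \in w -> a * b \in w)
  (dom : forall a b : R, a * b = 0 -> (a == 0) || (b == 0)).

Definition fsT := seq_sub w.
HB.instance Definition _ := Finite.on fsT.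
Definition fs0 : fsT := SeqSub w0.
Definition fs1 : fsT := SeqSub w1.
Definition fsopp (a : fsT) : fsT := SeqSub (wN (ssvalP a)).
Definition fsadd (a b : fsT) : fsT := SeqSub (wD (ssvalP a) (ssvalP b)).
Definition fsmul (a b : fsT) : fsT := SeqSub (wM (ssvalP a) (ssvalP b)).

Fact fs_addA : associative fsadd.
Proof. by move=> a b c; apply: val_inj; rewrite /= addrA. Qed.
Fact fs_addC : commutative fsadd.
Proof. by move=> a b; apply: val_inj; rewrite /= addrC. Qed.
Fact fs_add0 : left_id fs0 fsadd.
Proof. by move=> a; apply: val_inj; rewrite /= add0r. Qed.
Fact fs_addN : left_inverse fs0 fsopp fsadd.
Proof. by move=> a; apply: val_inj; rewrite /= addNr. Qed.
HB.instance Definition _ := GRing.isZmodule.Build fsT fs_addA fs_addC fs_add0 fs_addN.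

Fact fs_mulA : associative fsmul.
Proof. by move=> a b c; apply: val_inj; rewrite /= mulrA. Qed.
Fact fs_mul1l : left_id fs1 fsmul.
Proof. by move=> a; apply: val_inj; rewrite /= mul1r. Qed.
Fact fs_mul1r : right_id fs1 fsmul.
Proof. by move=> a; apply: val_inj; rewrite /= mulr1. Qed.
Fact fs_mulDl : left_distributive fsmul fsadd.
Proof. by move=> a b c; apply: val_inj; rewrite /= mulrDl. Qed.
Fact fs_mulDr : right_distributive fsmul fsadd.
Proof. by move=> a b c; apply: val_inj; rewrite /= mulrDr. Qed.
Fact fs_1n0 : fs1 != 0.
Proof. apply/eqP=> /(congr1 val) /= /eqP; by rewrite oner_eq0. Qed.
HB.instance Definition _ := GRing.Zmodule_isNzRing.Build fsT fs_mulA fs_mul1l fs_mul1r fs_mulDl fs_mulDr fs_1n0.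

Definition fsunit : pred fsT := fun a => [exists b : fsT, (a * b == 1) && (b * a == 1)].
Definition fsinv (a : fsT) : fsT := odflt a [pick b : fsT | (a * b == 1) && (b * a == 1)].
Fact fs_mulVr : {in fsunit, left_inverse 1 fsinv *%R}.
Proof.
move=> a ha; have /existsP[b hb] : fsunit a := ha; rewrite /fsinv.
by case: pickP => [c /andP[_ /eqP]|/(_ b)]; [|rewrite hb].
Qed.
Fact fs_divrr : {in fsunit, right_inverse 1 fsinv *%R}.
Proof.
move=> a ha; have /existsP[b hb] : fsunit a := ha; rewrite /fsinv.
by case: pickP => [c /andP[/eqP]|/(_ b)]; [|rewrite hb].
Qed.
Fact fs_unitrP : forall x y : fsT, y * x = 1 /\ x * y = 1 -> fsunit x.
Proof. by move=> a b [h1 h2]; apply/existsP; exists b; rewrite h1 h2 !eqxx. Qed.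
Fact fs_invr_out : {in [predC fsunit], fsinv =1 id}.
Proof.
move=> a ha; have /existsPn hn : ~~ fsunit a := ha; rewrite /fsinv.
by case: pickP => // c hc; move: (hn c); rewrite hc.
Qed.
HB.instance Definition _ := GRing.NzRing_hasMulInverse.Build fsT fs_mulVr fs_divrr fs_unitrP fs_invr_out.

Fact fs_dom : GRing.integral_domain_axiom fsT.
Proof.
move=> a b /(congr1 val) /= /dom /orP[] /eqP h; apply/orP; [left|right];
  apply/eqP; exact: val_inj.
Qed.

Lemma finsub_comm a b : a \in w -> b \in w -> a * b = b * a.
Proof.
move=> ha hb.
have := @finDomain_mulrC fsT fs_dom (SeqSub ha) (SeqSub hb).
by move/(congr1 val).
Qed.

Fact fs_mulC : @commutative fsT fsT *%R.
Proof. by move=> a b; apply: val_inj; rewrite /= finsub_comm // ssvalP. Qed.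
HB.instance Definition _ := GRing.PzRing_hasCommutativeMul.Build fsT fs_mulC.
HB.instance Definition _ := GRing.ComUnitRing_isField.Build fsT (finDomain_field fs_dom).

Lemma fs_valX (a : fsT) k : val (a ^+ k) = val a ^+ k.
Proof. by elim: k => [|k IH]; rewrite ?expr0 // !exprS /= IH. Qed.

Variable x : R.
Hypothesis hx : x \in w.

Definition pev (P : {poly fsT}) (v : R) := \sum_(i < size P) val P`_i * v * x ^+ i.

Lemma pev_wide N (P : {poly fsT}) (v : R) : (size P <= N)%N -> pev P v = \sum_(i < N) val P`_i * v * x ^+ i.
Proof.
move=> hN; rewrite /pev (big_ord_widen N (fun i => val P`_i * v * x ^+ i) hN).
rewrite big_mkcond; apply: eq_bigr => i _; case: ifP => // /negbT.
by rewrite -leqNgt => h; rewrite nth_default // !mul0r.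
Qed.

Lemma pevD (P Q : {poly fsT}) v : pev (P + Q) v = pev P v + pev Q v.
Proof.
rewrite !(@pev_wide (maxn (size P) (size Q))) ?size_add ?leq_maxl ?leq_maxr //.
by rewrite -big_split; apply: eq_bigr => i _; rewrite coefD /= !mulrDl.
Qed.

Lemma pevN (P : {poly fsT}) v : pev (- P) v = - pev P v.
Proof.
rewrite /pev size_polyN -sumrN; apply: eq_bigr => i _.
by rewrite coefN /= !mulNr.
Qed.

Lemma pevB (P Q : {poly fsT}) v : pev (P - Q) v = pev P v - pev Q v.
Proof. by rewrite pevD pevN. Qed.

Lemma pev_vB (P : {poly fsT}) u u' : pev P (u - u') = pev P u - pev P u'.
Proof. by rewrite /pev -sumrB; apply: eq_bigr => i _; rewrite mulrBr mulrBl. Qed.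

Lemma pevMX (P : {poly fsT}) v : pev (P * 'X) v = pev P (v * x).
Proof.
have hs : (size (P * 'X)%R <= (size P).+1)%N.
  by apply: leq_trans (size_mul_leq P (polyX fsT)) _; rewrite size_polyX addn2.
rewrite (pev_wide _ hs) big_ord_recl coefMX /= !mul0r add0r /pev.
by apply: eq_bigr => i _; rewrite coefMX /bump /= add1n exprS !mulrA.
Qed.

Lemma pevMC (P : {poly fsT}) (c : fsT) v : pev (P * c%:P) v = pev P (val c * v).
Proof.
have hs : (size (P * c%:P)%R <= size P)%N.
  apply: leq_trans (size_mul_leq P c%:P) _.
  have := size_polyC_leq1 c; case: (size c%:P) => [|[|]] //= _.
    by rewrite addn0; apply: leq_pred.
  by rewrite addn1.
rewrite (pev_wide _ hs); apply: eq_bigr => i _.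
by rewrite coefMC /= !mulrA.
Qed.

Lemma pev1 (v : R) : pev 1 v = v.
Proof. by rewrite /pev size_poly1 big_ord1 coefC /= mul1r mulr1. Qed.

Lemma pevXn k (v : R) : pev 'X^k v = v * x ^+ k.
Proof.
elim: k v => [|k IH] v; first by rewrite expr0 pev1 mulr1.
by rewrite exprSr pevMX IH exprS mulrA.
Qed.

Lemma pevXsub (P : {poly fsT}) (c : fsT) v : pev (P * ('X - c%:P)) v = pev P (v * x - val c * v).
Proof. by rewrite mulrBr pevB pevMX pevMC pev_vB. Qed.

Lemma find_eig (s : seq fsT) v : v != 0 ->
  pev (\prod_(c <- s) ('X - c%:P)) v = 0 ->
  exists c, c \in s /\ exists b, b != 0 /\ b * x = val c * b.
Proof.
elim: s v => [|c0 s IH] v hv; first by rewrite big_nil pev1 => h; rewrite h eqxx in hv.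
rewrite big_cons mulrC pevXsub.
case: (eqVneq (v * x - val c0 * v) 0) => [h0 _|hne /(IH _ hne)[c [hc hb]]].
  by exists c0; split; [rewrite mem_head|exists v; split => //; apply/eqP; rewrite -subr_eq0 h0].
by exists c; split => //; rewrite in_cons hc orbT.
Qed.

Lemma fs_eigen y : y * x != x * y ->
  exists b, exists l, [/\ b != 0, l \in w, l != x & b * x = l * b].
Proof.
move=> hyx.
pose xT : fsT := SeqSub hx.
have hxM : x ^+ #|(fsT : finType)| = x.
  by have := congr1 val (expf_card xT); rewrite fs_valX.
have hz : pev ('X^#|(fsT : finType)| - 'X) y = 0.
  by rewrite pevB -{2}(expr1 'X) !pevXn hxM expr1 subrr.
rewrite finField_genPoly (bigD1 xT) //= mulrC -big_filter pevXsub in hz.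
have hne : y * x - val xT * y != 0 by rewrite subr_eq0.
have [c [hc [b [hb0 hbx]]]] := find_eig hne hz.
exists b, (val c); split => //; first exact: ssvalP.
move: hc; rewrite mem_filter => /andP[hcx _]; apply: contra hcx => /eqP h.
by apply/eqP; apply: val_inj.
Qed.

End FinSub.

Section Span.
Variable R : nzRingType.
Variables (L : seq R) (m : nat) (g : 'I_m -> R).

Definition spanl : seq R :=
  map (fun f : {ffun 'I_m -> seq_sub L} => \sum_(i < m) ssval (f i) * g i)
    (enum {ffun 'I_m -> seq_sub L}).

Lemma mem_spanl (c : 'I_m -> R) : (forall i, c i \in L) -> \sum_(i < m) c i * g i \in spanl.
Proof.
move=> hc; apply/mapP; exists [ffun i => SeqSub (hc i)]; first by rewrite mem_enum.
by apply: eq_bigr => i _; rewrite ffunE.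
Qed.

Lemma spanlP z : z \in spanl -> exists c : 'I_m -> R, (forall i, c i \in L) /\ z = \sum_(i < m) c i * g i.
Proof.
case/mapP => f _ ->; exists (fun i => ssval (f i)); split => // i; exact: ssvalP.
Qed.

End Span.


Section HA.
Variables (F : fieldType) (R : unitAlgType F) (z : R).
Lemma ha0 : horner_alg z (0 : {poly F}) = 0. Proof. exact: rmorph0. Qed.
Lemma ha1 : horner_alg z (1 : {poly F}) = 1. Proof. exact: rmorph1. Qed.
Lemma haD (p p' : {poly F}) : horner_alg z (p + p') = horner_alg z p + horner_alg z p'.
Proof. exact: rmorphD. Qed.
Lemma haN (p : {poly F}) : horner_alg z (- p) = - horner_alg z p.
Proof. exact: rmorphN. Qed.
Lemma haM (p p' : {poly F}) : horner_alg z (p * p') = horner_alg z p * horner_alg z p'.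
Proof. exact: rmorphM. Qed.
Lemma haX : horner_alg z ('X : {poly F}) = z. Proof. exact: horner_algX. Qed.
Lemma haXn k : horner_alg z ('X^k : {poly F}) = z ^+ k.
Proof. by elim: k => [|k IH]; rewrite ?expr0 ?ha1 // !exprSr haM IH haX. Qed.
End HA.

Section Jac.
Variables (F : fieldType) (R : unitAlgType F).
Hypothesis hdiv : forall x : R, x != 0 -> x \is a GRing.unit.
Variable q : {poly F}.
Hypothesis hq : q != 0.
Hypothesis hall : forall s : R, horner_alg s q = 0.

Lemma Rdom (a b : R) : a * b = 0 -> (a == 0) || (b == 0).
Proof.
move=> hab; case: (eqVneq a 0) => //= ha; apply/eqP.
by rewrite -(mulKr (hdiv ha) b) hab mulr0.
Qed.

Lemma horner_alg_wide N (z : R) (r : {poly F}) : (size r <= N)%N ->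
  horner_alg z r = \sum_(i < N) (r`_i)%:A * z ^+ i.
Proof.
move=> hN; rewrite /horner_alg /horner_morph (@horner_coef_wide _ N (map_poly (in_alg R) r)).
  by apply: eq_bigr => i _; rewrite coef_map.
by rewrite size_map_poly.
Qed.

Lemma rootsF (c : F) : q.[c] = 0.
Proof.
have := hall (c%:A); rewrite /horner_alg /horner_morph.
rewrite (horner_map (in_alg R)) => /eqP; rewrite fmorph_eq0 => /eqP //.
Qed.

Lemma enumF : exists eF : seq F, forall c, c \in eF.
Proof.
suff H : forall k (rs : seq F), uniq rs -> (size q - size rs <= k)%N ->
    exists eF : seq F, forall c, c \in eF.
  by apply: (H (size q) [::]) => //; rewrite subn0.
elim=> [|k IH] rs urs hk.
  have := max_poly_roots hq _ urs.
  have -> : all (root q) rs by apply/allP => c _; rewrite /root rootsF.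
  by move=> /(_ isT); rewrite -subn_gt0 => h; move: hk; rewrite leqNgt h.
case: (Classical_Prop.classic (exists c, c \notin rs)) => [[c hc]|hn].
  apply: (IH (c :: rs)); first by rewrite /= hc.
  by move: hk; rewrite /= subnS; case: (size q - size rs)%N.
exists rs => c; apply/negPn/negP => hc; apply: hn; by exists c.
Qed.

Variable eF : seq F.
Hypothesis heF : forall c, c \in eF.

Definition Dq := (size q).-1.
Definition Klist (z : R) := spanl (map (in_alg R) eF) (fun i : 'I_Dq => z ^+ i).

Lemma Klist_mem z h : horner_alg z h \in Klist z.
Proof.
have -> : horner_alg z h = horner_alg z (h %% q).
  by rewrite {1}(divp_eq h q) haD haM hall mulr0 add0r.
have hs : (size (h %% q)%R <= Dq)%N.
  by rewrite /Dq -ltnS prednK ?ltn_modpN0 // size_poly_gt0.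
rewrite (horner_alg_wide _ hs); apply: mem_spanl => i.
exact: map_f.
Qed.

Lemma Klist_inv z k : k \in Klist z -> exists h, k = horner_alg z h.
Proof.
case/spanlP => c [hc ->].
apply: (big_ind (fun k => exists h, k = horner_alg z h)).
- by exists 0; rewrite ha0.
- by move=> a b [ha ->] [hb ->]; exists (ha + hb); rewrite haD.
move=> i _; case/mapP: (hc i) => e _ ->.
by exists (e%:P * 'X^i); rewrite haM haXn horner_algC.
Qed.

Lemma Klist0 z : 0 \in Klist z.
Proof. by rewrite -(ha0 z) Klist_mem. Qed.
Lemma Klist1 z : 1 \in Klist z.
Proof. by rewrite -(ha1 z) Klist_mem. Qed.
Lemma KlistN z a : a \in Klist z -> - a \in Klist z.
Proof. by case/Klist_inv => h ->; rewrite -haN Klist_mem. Qed.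
Lemma KlistD z a b : a \in Klist z -> b \in Klist z -> a + b \in Klist z.
Proof. by case/Klist_inv => h -> /Klist_inv[h' ->]; rewrite -haD Klist_mem. Qed.
Lemma KlistM z a b : a \in Klist z -> b \in Klist z -> a * b \in Klist z.
Proof. by case/Klist_inv => h -> /Klist_inv[h' ->]; rewrite -haM Klist_mem. Qed.
Lemma KlistC z (c : F) : c%:A \in Klist z.
Proof. by rewrite -(horner_algC z) Klist_mem. Qed.
Lemma Klist_horner z l h : l \in Klist z -> horner_alg l h \in Klist z.
Proof.
move=> hl; elim/poly_ind: h => [|h c IH]; first by rewrite ha0 Klist0.
rewrite haD haM -(expr1 'X) haXn expr1 horner_algC.
by apply: KlistD; [apply: KlistM|apply: KlistC].
Qed.

Lemma conj_horner (b x l : R) h : b * x = l * b -> b * horner_alg x h = horner_alg l h * b.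
Proof.
move=> hb; elim/poly_ind: h => [|h c IH]; first by rewrite !ha0 mulr0 mul0r.
rewrite !haD !haM -(expr1 'X) !haXn !expr1 !horner_algC mulrDr mulrDl.
by rewrite mulrA IH -!mulrA hb (comm_alg c b).
Qed.

Lemma noncomm_false (x y : R) : x * y != y * x -> False.
Proof.
move=> hxy.
have hx : x \in Klist x by rewrite -{1}(expr1 x) -haXn Klist_mem.
have hyx : y * x != x * y by rewrite eq_sym.
have [b [l [hb0 hl hlx hbx]]] := fs_eigen (Klist0 x) (Klist1 x) (@KlistN x) (@KlistD x)
  (@KlistM x) Rdom hx hyx.
have [m hm0 hbm] : exists2 m, (0 < m)%N & b ^+ m = 1.
  pose s := [seq b ^+ i | i <- iota 0 (size (Klist b)).+1].
  have : ~~ uniq s.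
    apply/negP => us.
    have hsub : {subset s <= Klist b}.
      by move=> z /mapP[i _ ->]; rewrite -haXn Klist_mem.
    by have := uniq_leq_size us hsub; rewrite size_map size_iota ltnn.
  case/(uniqPn 0) => i [j [hij hj]]; rewrite size_map size_iota in hj.
  rewrite !(nth_map 0%N) ?size_iota ?(ltn_trans hij) // !nth_iota ?(ltn_trans hij) //.
  rewrite !add0n => hbij; exists (j - i)%N; first by rewrite subn_gt0.
  have hu : b ^+ i \is a GRing.unit by rewrite unitrX // hdiv.
  apply: (mulrI hu); rewrite -exprD subnKC ?(ltnW hij) // mulr1 //.
have hmod j : b ^+ j = b ^+ (j %% m).
  by rewrite {1}(divn_eq j m) exprD mulnC exprM hbm expr1n mul1r.
pose W := spanl (Klist x) (fun i : 'I_m => b ^+ i).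
have Wkb k j : k \in Klist x -> k * b ^+ j \in W.
  move=> hk; rewrite hmod.
  pose j0 := Ordinal (ltn_pmod j hm0).
  have -> : k * b ^+ (j %% m) = \sum_(i < m) (if i == j0 then k else 0) * b ^+ i.
    by rewrite (bigD1 j0) //= eqxx big1 ?addr0 // => i /negPf ->; rewrite mul0r.
  apply: mem_spanl => i; case: ifP => _ //; exact: Klist0.
have W0 : 0 \in W by rewrite -(mul0r (b ^+ 0)) Wkb // Klist0.
have WD a c : a \in W -> c \in W -> a + c \in W.
  case/spanlP => ca [hca ->] /spanlP[cc [hcc ->]].
  rewrite -big_split /=; under eq_bigr do rewrite -mulrDl.
  by apply: mem_spanl => i; apply: KlistD.
have Wsum (I : finType) (f : I -> R) : (forall i, f i \in W) -> \sum_i f i \in W.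
  by move=> hf; apply: (big_ind (fun z => z \in W)) => // a c; apply: WD.
have conjK i k : k \in Klist x -> exists2 k', k' \in Klist x & b ^+ i * k = k' * b ^+ i.
  elim: i k => [|i IH] k hk; first by exists k; rewrite // expr0 mul1r mulr1.
  case/Klist_inv: hk => h ->.
  have hk1 : horner_alg l h \in Klist x by apply: Klist_horner.
  have [k' hk' e] := IH _ hk1.
  exists k' => //; rewrite exprSr -mulrA (conj_horner h hbx) mulrA e.
  by rewrite -mulrA -exprSr.
have WM a c : a \in W -> c \in W -> a * c \in W.
  case/spanlP => ca [hca ->] /spanlP[cc [hcc ->]].
  rewrite mulr_suml; apply: (Wsum) => i; rewrite mulr_sumr; apply: (Wsum) => j.
  have [k' hk' e] := conjK i _ (hcc j).
  have -> : ca i * b ^+ i * (cc j * b ^+ j) = ca i * (b ^+ i * cc j) * b ^+ j.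
    by rewrite !mulrA.
  by rewrite e mulrA -mulrA -exprD Wkb // KlistM.
have WN a : a \in W -> - a \in W.
  case/spanlP => ca [hca ->]; rewrite -sumrN; under eq_bigr do rewrite -mulNr.
  by apply: mem_spanl => i; apply: KlistN.
have W1 : 1 \in W by have := Wkb 1%R 0%N (Klist1 x); rewrite expr0 mulr1.
have hbW : b \in W by have := Wkb 1%R 1%N (Klist1 x); rewrite expr1 mul1r.
have hxW : x \in W by have := Wkb x 0%N hx; rewrite expr0 mulr1.
have := finsub_comm W0 W1 WN WD WM Rdom hbW hxW.
rewrite hbx => /eqP; rewrite -subr_eq0 -mulrBl => /eqP /Rdom.
by rewrite (negPf hb0) orbF subr_eq0 (negPf hlx).
Qed.

End Jac.

Lemma nonroot (F : fieldType) (R : unitAlgType F)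
  (hdiv : forall x : R, x != 0 -> x \is a GRing.unit)
  (hnc : exists x y : R, x * y != y * x) (q : {poly F}) (hq : q != 0) :
  exists s : R, horner_alg s q != 0.
Proof.
case: (Classical_Prop.classic (exists s : R, horner_alg s q != 0)) => // hn.
have hall : forall s : R, horner_alg s q = 0.
  by move=> s; apply/eqP/negP => h; apply: hn; exists s; apply/negP.
have [eF heF] := enumF hq hall.
case: hnc => x [y hxy].
exfalso; exact: (noncomm_false hdiv hq hall heF hxy).
Qed.

Section Mat.
Variables (F : fieldType) (R : unitAlgType F) (n' : nat).
Local Notation n := n'.+2.

Lemma sum1 (f : 'I_n -> R) : (forall i : 'I_n, val i != 0%N -> f i = 0) -> \sum_i f i = f ord0.
Proof. by move=> h; rewrite big_ord_recl big1 ?addr0 // => i _; apply: h. Qed.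

Lemma sum2 (f : 'I_n -> R) : (forall i : 'I_n, (1 < val i)%N -> f i = 0) ->
  \sum_i f i = f ord0 + f (lift ord0 ord0).
Proof.
move=> h; rewrite !big_ord_recl big1 ?addr0 ?addrA // => i _; apply: h.
by [].
Qed.

Variables (x y s c : R).
Definition av (i : 'I_n) : R := if val i == 0%N then 1 else if val i == 1%N then x else 0.
Definition bv (i : 'I_n) : R := if val i == 0%N then s - c * x else if val i == 1%N then c else 0.
Definition Am : 'M[R]_n := \matrix_(i, j) (if val j == 0%N then av i else 0).
Definition Bm : 'M[R]_n := \matrix_(i, j) (if val i == 0%N then bv j else 0).

Lemma av_out i : (1 < val i)%N -> av i = 0.
Proof. by rewrite /av; case: (val i) => [|[|]]. Qed.
Lemma bv_out i : (1 < val i)%N -> bv i = 0.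
Proof. by rewrite /bv; case: (val i) => [|[|]]. Qed.

Lemma hsum : bv ord0 + bv (lift ord0 ord0) * x = s.
Proof. by rewrite /bv /= subrK. Qed.

Lemma AB_E : Am *m Bm = \matrix_(i, j) (av i * bv j).
Proof.
apply/matrixP => i j; rewrite !mxE (@sum1 (fun l => Am i l * Bm l j)).
  by rewrite !mxE /=.
by move=> l /negPf hl; rewrite !mxE hl mul0r.
Qed.

Lemma BA_E : Bm *m Am = \matrix_(i, j) (if (val i == 0%N) && (val j == 0%N) then s else 0).
Proof.
apply/matrixP => i j; rewrite !mxE.
case: ifP => [/andP[/eqP hi /eqP hj]|hij].
  rewrite (@sum2 (fun l => Bm i l * Am l j)).
    by rewrite !mxE hi hj /= -hsum /av /= mulr1.
  by move=> l hl; rewrite !mxE av_out // !if_same mulr0.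
rewrite big1 // => l _; rewrite !mxE.
by case: (val i == 0%N) hij => /=; [move=> ->; rewrite mulr0|rewrite mul0r].
Qed.

Lemma powAB k : (Am *m Bm) ^+ k.+1 = \matrix_(i, j) (av i * s ^+ k * bv j).
Proof.
elim: k => [|k IH].
  by rewrite expr1 AB_E; apply/matrixP => i j; rewrite !mxE expr0 mulr1.
rewrite exprSr IH AB_E -mulmxE; apply/matrixP => i j; rewrite !mxE.
rewrite (@sum2 (fun l => (\matrix_(i0, j0) (av i0 * s ^+ k * bv j0)) i l * (\matrix_(i0, j0) (av i0 * bv j0)) l j)).
  have e : forall a b, a * bv ord0 * (1 * b) + a * bv (lift ord0 ord0) * (x * b) = a * s * b.
    by move=> a b; rewrite /bv /= mulrBr mulrBl mul1r !mulrA subrK.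
  have a0 : av ord0 = 1 by [].
  have a1 : av (lift ord0 ord0) = x by [].
  by rewrite !mxE a0 a1 e exprSr mulrA.
by move=> l hl; rewrite !mxE bv_out // mulr0 mul0r.
Qed.

Lemma powBA k : (Bm *m Am) ^+ k.+1 =
  \matrix_(i, j) (if (val i == 0%N) && (val j == 0%N) then s ^+ k.+1 else 0).
Proof.
elim: k => [|k IH].
  by rewrite expr1 BA_E; apply/matrixP => i j; rewrite !mxE expr1.
rewrite exprSr IH BA_E -mulmxE; apply/matrixP => i j; rewrite !mxE.
rewrite (@sum1 (fun l => (\matrix_(i0, j0) (if (val i0 == 0%N) && (val j0 == 0%N) then s ^+ k.+1 else 0)) i l * (\matrix_(i0, j0) (if (val i0 == 0%N) && (val j0 == 0%N) then s else 0)) l j)).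
  rewrite !mxE /=; case: (val i == 0%N); case: (val j == 0%N) => /=;
    by rewrite ?mulr0 ?mul0r // -exprSr.
by move=> l /negPf hl; rewrite !mxE hl andbF mulr0.
Qed.

Lemma trAB k : \tr ((Am *m Bm) ^+ k.+1) = s ^+ k * bv ord0 + x * s ^+ k * c.
Proof.
rewrite powAB /mxtrace (@sum2 (fun i => (\matrix_(i0, j0) (av i0 * s ^+ k * bv j0)) i i)).
  by rewrite !mxE /av /bv /= mul1r.
by move=> i hi; rewrite mxE bv_out // mulr0.
Qed.

Lemma trBA k : \tr ((Bm *m Am) ^+ k.+1) = s ^+ k.+1.
Proof.
rewrite powBA /mxtrace (@sum1 (fun i => (\matrix_(i0, j0) (if (val i0 == 0%N) && (val j0 == 0%N) then s ^+ k.+1 else 0)) i i)).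
  by rewrite mxE.
by move=> i /negPf hi; rewrite mxE hi.
Qed.

Lemma tr_peval (p : {poly F}) (M : 'M[R]_n) :
  \tr (mx_peval p M) = \sum_(i < size p) (p`_i)%:A * \tr (M ^+ i).
Proof.
rewrite /mx_peval /mxtrace; under eq_bigr do rewrite summxE.
rewrite exchange_big; apply: eq_bigr => i _; rewrite mulr_sumr.
by apply: eq_bigr => j _; rewrite mul_scalar_mx mxE.
Qed.

End Mat.

Lemma trB (F : fieldType) (R : unitAlgType F) m (P Q : 'M[R]_m) : \tr (P - Q) = \tr P - \tr Q.
Proof. by rewrite mxtraceD raddfN. Qed.

Lemma abc_lem (R : ringType) (A B C : R) : A - B + C - A = C - B.
Proof. by rewrite addrAC (addrAC A) subrr add0r addrC. Qed.

Unset Implicit Arguments.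

Theorem theorem3p1 (F : fieldType) (R : unitAlgType F) (n : nat)
  (hdiv : is_division_algebra R)
  (hnc : exists x y : R, x * y != y * x)
  (hn : (2 <= n)%N)
  (p : {poly F}) (hp : (1 < size p)%N) :
  exists A B : 'M[R]_n,
    \tr (mx_peval p (A *m B) - mx_peval p (B *m A)) != 0.
Proof.
have hp0 : (0 < size p)%N by apply: ltn_trans hp.
set N := (size p).-1.
have hN : size p = N.+1 by rewrite prednK.
have hN0 : (0 < N)%N by rewrite -ltnS -hN.
pose q := \poly_(i < N) p`_i.+1.
have hq : q != 0.
  apply/eqP => /(congr1 (fun r : {poly F} => r`_N.-1)).
  rewrite coef_poly coef0 ltn_predL hN0 prednK //.
  move/eqP; rewrite /N -lead_coefE lead_coef_eq0 => /eqP hp00.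
  by move: hp0; rewrite hp00 size_poly0.
have [s hs] := nonroot hdiv hnc hq.
set wv := horner_alg s q in hs.
have hwv : wv = \sum_(k < N) (p`_k.+1)%:A * s ^+ k.
  rewrite /wv (horner_alg_wide _ (size_poly _ _)).
  by apply: eq_bigr => k _; rewrite coef_poly ltn_ord.
have hu : wv \is a GRing.unit by apply: hdiv.
case: hnc => x [y hxy].
case: n hn => [|[|n']] // _.
exists (@Am _ _ n' x), (@Bm _ _ n' x s (wv^-1 * y)).
rewrite trB !tr_peval hN !big_ord_recl !expr0 opprD addrACA subrr add0r -sumrB.
have -> : \sum_(i < N) ((p`_(lift ord0 i))%:A * \tr ((@Am _ _ n' x *m @Bm _ _ n' x s (wv^-1 * y)) ^+ lift ord0 i)
      - (p`_(lift ord0 i))%:A * \tr ((@Bm _ _ n' x s (wv^-1 * y) *m @Am _ _ n' x) ^+ lift ord0 i))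
    = \sum_(k < N) (x * ((p`_k.+1)%:A * s ^+ k) * (wv^-1 * y) - ((p`_k.+1)%:A * s ^+ k) * (wv^-1 * y) * x).
  apply: eq_bigr => k _; rewrite lift0 trAB trBA /bv /= exprSr -mulrBr.
  rewrite [s ^+ k * (s - _)]mulrBr abc_lem mulrBr !mulrA (comm_alg (p`_k.+1) x).
  by [].
rewrite sumrB -!mulr_suml -mulr_sumr -hwv.
have e1 : wv * (wv^-1 * y) = y by rewrite mulrA divrr // mul1r.
by rewrite -mulrA e1 subr_eq0.
Qed.
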